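(* Assume the setting and the CRAIG recurrence described in the context, and let $k\ge1$ be such that $u^{(k)},p^{(k)},\zeta_k$ and $g_k$ (hence $\beta_{k+1}$) are defined. Then $Mu^{(k)}+Ap^{(k)}=0$ and $b-A^Tu^{(k)}+Cp^{(k)}=-\zeta_k\,N g_k$ (which equals $-\zeta_k\beta_{k+1}Nq_{k+1}$ when $\beta_{k+1}>0$). In particular the residual of the second block equation is orthogonal (in the Euclidean inner product) to $q_1,\dots,q_k$, and $\|b-A^Tu^{(k)}+Cp^{(k)}\|_{N^{-1}}=\beta_{k+1}|\zeta_k|$, so that $\|b-A^Tu^{(k)}+Cp^{(k)}\|_{N^{-1}}/\|b\|_{N^{-1}}=\beta_{k+1}|\zeta_k|/\beta_1$.
   Context: Setting: $M\in\mathbb{R}^{m\times m}$ is symmetric positive definite, $A\in\mathbb{R}^{m\times n}$ ($n\le m$) has full column rank, $C\in\mathbb{R}^{n\times n}$ is symmetric positive semidefinite, $b\in\mathbb{R}^n$ is nonzero, and $N\in\mathbb{R}^{n\times n}$ is symmetric positive definite (the preconditioner). For a symmetric positive definite $G$ write $\|x\|_G=(x^TGx)^{1/2}$. The generalized saddle point system is $Mu+Ap=0$, $A^Tu-Cp=b$, with unique solution $(u_*,p_* )$; $S=A^TM^{-1}A+C$. CRAIG recurrence (exact arithmetic): Initialization: $\beta_1=\|b\|_{N^{-1}}$, $q_1=N^{-1}b/\beta_1$, $r_1=q_1$, $w_1=M^{-1}Aq_1$, $s_1=Cr_1$, $\alpha_1=(w_1^TMw_1+r_1^Ts_1)^{1/2}$,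 $v_1=w_1/\alpha_1$, $t_1=s_1/\alpha_1$, $\zeta_1=\beta_1/\alpha_1$, $u^{(1)}=\zeta_1v_1$, $p^{(1)}=-(\zeta_1/\alpha_1)r_1$. For $k=1,2,\dots$: $g_k=N^{-1}(A^Tv_k+t_k)-\alpha_kq_k$, $\beta_{k+1}=\|g_k\|_N$; if $\beta_{k+1}=0$ the recurrence stops; otherwise $q_{k+1}=g_k/\beta_{k+1}$, $w_{k+1}=M^{-1}Aq_{k+1}-\beta_{k+1}v_k$, $r_{k+1}=q_{k+1}-(\beta_{k+1}/\alpha_k)r_k$, $s_{k+1}=Cr_{k+1}$, $\alpha_{k+1}=(w_{k+1}^TMw_{k+1}+r_{k+1}^Ts_{k+1})^{1/2}$, $v_{k+1}=w_{k+1}/\alpha_{k+1}$, $t_{k+1}=s_{k+1}/\alpha_{k+1}$, $\zeta_{k+1}=-(\beta_{k+1}/\alpha_{k+1})\zeta_k$, $u^{(k+1)}=u^{(k)}+\zeta_{k+1}v_{k+1}$, $p^{(k+1)}=p^{(k)}-(\zeta_{k+1}/\alpha_{k+1})r_{k+1}$. *)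

(* Defs.v *)
From HB Require Import structures.
From mathcomp Require Import all_boot all_order all_algebra.
Set Implicit Arguments. Unset Strict Implicit. Unset Printing Implicit Defensive.
Import Order.TTheory GRing.Theory Num.Theory.
Local Open Scope ring_scope.

Definition qform (R : pzRingType) (k : nat) (G : 'M[R]_k) (x : 'cV[R]_k) : R :=
  (x^T *m G *m x) ord0 ord0.

Definition dotv (R : pzRingType) (k : nat) (x y : 'cV[R]_k) : R :=
  (x^T *m y) ord0 ord0.

Definition normG (R : rcfType) (k : nat) (G : 'M[R]_k) (x : 'cV[R]_k) : R :=
  Num.sqrt (qform G x).

Definition sym_pos_def (R : realFieldType) (k : nat) (G : 'M[R]_k) : Prop :=
  G^T = G /\ forall x : 'cV[R]_k, x != 0 -> 0 < qform G x.

Definition sym_pos_semidef (R : realFieldType) (k : nat) (G : 'M[R]_k) : Prop :=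
  G^T = G /\ forall x : 'cV[R]_k, 0 <= qform G x.

Record craig_state (R : Type) (m n : nat) := CraigState {
  cs_q : 'cV[R]_n; cs_r : 'cV[R]_n; cs_w : 'cV[R]_m; cs_s : 'cV[R]_n;
  cs_alpha : R; cs_v : 'cV[R]_m; cs_t : 'cV[R]_n; cs_zeta : R;
  cs_u : 'cV[R]_m; cs_p : 'cV[R]_n }.

Section Craig.
Variables (R : rcfType) (m n : nat).
Variables (M : 'M[R]_m) (A : 'M[R]_(m, n)) (C : 'M[R]_n) (N : 'M[R]_n)
          (b : 'cV[R]_n).

Definition craig_beta1 : R := normG (invmx N) b.

Definition craig_init : craig_state R m n :=
  let q1 := craig_beta1^-1 *: (invmx N *m b) in
  let r1 := q1 in
  let w1 := invmx M *m (A *m q1) in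
  let s1 := C *m r1 in
  let a1 := Num.sqrt (qform M w1 + dotv r1 s1) in
  let v1 := a1^-1 *: w1 in
  let t1 := a1^-1 *: s1 in
  let z1 := craig_beta1 / a1 in
  @CraigState R m n q1 r1 w1 s1 a1 v1 t1 z1 (z1 *: v1) (- ((z1 / a1) *: r1)).

Definition craig_g_of (st : craig_state R m n) : 'cV[R]_n :=
  invmx N *m (A^T *m cs_v st + cs_t st) - cs_alpha st *: cs_q st.

(* state k+1 from state k (meaningful when beta_{k+1} <> 0) *)
Definition craig_step (st : craig_state R m n) : craig_state R m n :=
  let g := craig_g_of st in
  let be := normG N g in
  let q' := be^-1 *: g in
  let w' := invmx M *m (A *m q') - be *: cs_v st in
  let r' := q' - (be / cs_alpha st) *: cs_r st in
  let s' := C *m r' in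
  let a' := Num.sqrt (qform M w' + dotv r' s') in
  let v' := a'^-1 *: w' in
  let t' := a'^-1 *: s' in
  let z' := - (be / a') * cs_zeta st in
  @CraigState R m n q' r' w' s' a' v' t' z'
    (cs_u st + z' *: v') (cs_p st - (z' / a') *: r').

(* 0-based iteration: craig_st j is the state with (1-based) index j+1 *)
Fixpoint craig_st (j : nat) : craig_state R m n :=
  match j with
  | O => craig_init
  | S j' => craig_step (craig_st j')
  end.

(* 1-based accessors, meaningful for k >= 1 *)
Definition craig_q (k : nat) := cs_q (craig_st k.-1).
Definition craig_r (k : nat) := cs_r (craig_st k.-1).
Definition craig_alpha (k : nat) := cs_alpha (craig_st k.-1).
Definition craig_zeta (k : nat) := cs_zeta (craig_st k.-1).
Definition craig_u (k : nat) := cs_u (craig_st k.-1).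
Definition craig_p (k : nat) := cs_p (craig_st k.-1).
Definition craig_g (k : nat) := craig_g_of (craig_st k.-1).
(* beta_{k+1} = ||g_k||_N, for k >= 1; beta 1 = beta_1 *)
Definition craig_beta (k : nat) : R :=
  if k is j.+2 then normG N (craig_g j.+1) else craig_beta1.

End Craig.

(* Main.v *)
Require Import Defs.
From HB Require Import structures.
From mathcomp Require Import all_boot all_order all_algebra.
From mathcomp Require Import ring lra.
Import Order.TTheory GRing.Theory Num.Theory.
Local Open Scope ring_scope.

Section Dot.
Variables (R : rcfType) (k : nat).
Implicit Types (x y z : 'cV[R]_k) (G : 'M[R]_k).

Lemma dotvC x y : dotv x y = dotv y x.
Proof. rewrite /dotv. have := trmx_mul x^T y. rewrite trmxK => <-. by rewrite [RHS]mxE. Qed.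

Lemma dotvDr x y z : dotv x (y + z) = dotv x y + dotv x z.
Proof. by rewrite /dotv mulmxDr mxE. Qed.

Lemma dotvZr a x y : dotv x (a *: y) = a * dotv x y.
Proof. by rewrite /dotv -scalemxAr mxE. Qed.

Lemma dotvNr x y : dotv x (- y) = - dotv x y.
Proof. by rewrite /dotv mulmxN mxE. Qed.

Lemma dotvBr x y z : dotv x (y - z) = dotv x y - dotv x z.
Proof. by rewrite dotvDr dotvNr. Qed.

Lemma dotv0r x : dotv x 0 = 0.
Proof. by rewrite /dotv mulmx0 mxE. Qed.

Lemma dotvDl x y z : dotv (y + z) x = dotv y x + dotv z x.
Proof. by rewrite dotvC dotvDr !(dotvC x). Qed.
Lemma dotvZl a x y : dotv (a *: y) x = a * dotv y x.
Proof. by rewrite dotvC dotvZr dotvC. Qed.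
Lemma dotvNl x y : dotv (- y) x = - dotv y x.
Proof. by rewrite dotvC dotvNr dotvC. Qed.
Lemma dotvBl x y z : dotv (y - z) x = dotv y x - dotv z x.
Proof. by rewrite dotvDl dotvNl. Qed.


Lemma qformE G x : qform G x = dotv x (G *m x).
Proof. by rewrite /qform /dotv mulmxA. Qed.
End Dot.

Lemma dotv_mul (R : rcfType) (k l : nat) (G : 'M[R]_(k,l)) (x : 'cV[R]_k) (y : 'cV[R]_l) :
  dotv x (G *m y) = dotv (G^T *m x) y.
Proof. by rewrite /dotv trmx_mul trmxK mulmxA. Qed.

Lemma mulmxZ (R : rcfType) (k l : nat) (G : 'M[R]_(k,l)) (c : R) (x : 'cV[R]_l) :
  G *m (c *: x) = c *: (G *m x).
Proof. by rewrite scalemxAr. Qed.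

Lemma dotv_sym (R : rcfType) (k : nat) (G : 'M[R]_k) (x y : 'cV[R]_k) :
  G^T = G -> dotv x (G *m y) = dotv y (G *m x).
Proof. by move=> HG; rewrite dotv_mul HG dotvC. Qed.

Section Main.
Variables (R : rcfType) (m n : nat).
Variables (M : 'M[R]_m) (A : 'M[R]_(m, n)) (C : 'M[R]_n) (N : 'M[R]_n) (b : 'cV[R]_n).
Hypotheses (HMs : M^T = M) (HMu : M \in unitmx) (HCs : C^T = C) (HNs : N^T = N)
  (HNu : N \in unitmx) (HMpos : forall x, 0 <= qform M x) (HCpos : forall x, 0 <= qform C x)
  (HNpos : forall x, 0 <= qform N x) (HNipos : forall x, 0 <= qform (invmx N) x).

Local Notation st i := (craig_st M A C N b i).
Local Notation q i := (cs_q (st i)).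
Local Notation r i := (cs_r (st i)).
Local Notation w i := (cs_w (st i)).
Local Notation s i := (cs_s (st i)).
Local Notation al i := (cs_alpha (st i)).
Local Notation v i := (cs_v (st i)).
Local Notation t i := (cs_t (st i)).
Local Notation z i := (cs_zeta (st i)).
Local Notation u i := (cs_u (st i)).
Local Notation p i := (cs_p (st i)).
Local Notation g i := (craig_g_of A N (st i)).
Local Notation be i := (normG N (g i)).
Local Notation beta1 := (craig_beta1 N b).
Local Notation rho i := ((al i)^-1 *: r i).

Lemma q_S i : q i.+1 = (be i)^-1 *: g i. Proof. by []. Qed.
Lemma r_S i : r i.+1 = q i.+1 - (be i / al i) *: r i. Proof. by []. Qed.
Lemma w_S i : w i.+1 = invmx M *m (A *m q i.+1) - be i *: v i. Proof. by []. Qed.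
Lemma z_S i : z i.+1 = - (be i / al i.+1) * z i. Proof. by []. Qed.
Lemma u_S i : u i.+1 = u i + z i.+1 *: v i.+1. Proof. by []. Qed.
Lemma p_S i : p i.+1 = p i - (z i.+1 / al i.+1) *: r i.+1. Proof. by []. Qed.
Lemma q_0 : q 0 = beta1^-1 *: (invmx N *m b). Proof. by []. Qed.
Lemma r_0 : r 0 = q 0. Proof. by []. Qed.
Lemma w_0 : w 0 = invmx M *m (A *m q 0). Proof. by []. Qed.
Lemma z_0 : z 0 = beta1 / al 0. Proof. by []. Qed.
Lemma u_0 : u 0 = z 0 *: v 0. Proof. by []. Qed.
Lemma p_0 : p 0 = - ((z 0 / al 0) *: r 0). Proof. by []. Qed.
Lemma s_all i : s i = C *m r i. Proof. by case: i. Qed.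
Lemma al_all i : al i = Num.sqrt (qform M (w i) + dotv (r i) (s i)). Proof. by case: i. Qed.
Lemma v_all i : v i = (al i)^-1 *: w i. Proof. by case: i. Qed.
Lemma t_all i : t i = C *m rho i. Proof. by case: i => [|i] /=; rewrite scalemxAr. Qed.
Lemma g_all i : g i = invmx N *m (A^T *m v i + C *m rho i) - al i *: q i.
Proof. by rewrite /craig_g_of t_all. Qed.

Lemma MinvM (x : 'cV[R]_m) : M *m (invmx M *m x) = x.
Proof. by rewrite mulmxA mulmxV // mul1mx. Qed.
Lemma NinvN (x : 'cV[R]_n) : N *m (invmx N *m x) = x.
Proof. by rewrite mulmxA mulmxV // mul1mx. Qed.

Lemma Mw i : M *m w i = A *m r i.
Proof.
elim: i => [|i IH]; first by rewrite w_0 MinvM r_0.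
rewrite w_S r_S; move: (q i.+1) => Q.
rewrite mulmxBr MinvM v_all -!scalemxAr IH mulmxBr -!scalemxAr.
by rewrite scalerA mulrC.
Qed.

Lemma claim1 i : M *m u i + A *m p i = 0.
Proof.
elim: i => [|i IH].
  rewrite u_0 p_0 v_all; move: (z 0) (al 0) => Z a.
  by rewrite -!scalemxAr mulmxN -scalemxAr Mw scalerA subrr.
rewrite u_S p_S mulmxDr mulmxBr addrACA IH add0r v_all.
move: (z i.+1) (al i.+1) => Z a.
rewrite -[M *m _]scalemxAr -[M *m _]scalemxAr -[A *m _]scalemxAr Mw scalerA; exact: subrr.
Qed.

Lemma Ng i : N *m g i = A^T *m v i + C *m rho i - al i *: (N *m q i).
Proof. by rewrite g_all mulmxBr NinvN (@mulmxZ _ _ _ N). Qed.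

Lemma claim2 K : beta1 != 0 -> (forall i, (i <= K)%N -> al i != 0) ->
  (forall i, (i < K)%N -> be i != 0) ->
  b - A^T *m u K + C *m p K = - (z K *: (N *m g K)).
Proof.
move=> Hb1; elim: K => [|K IH] Hal Hbe.
  rewrite u_0 p_0 Ng q_0 z_0 (@mulmxZ _ _ _ N) NinvN v_all !mulmxZ mulmxN !mulmxZ.
  have a0 := Hal 0%N (leqnn _).
  move: (A^T *m w 0) (C *m (invmx N *m b)) (al 0) a0 => X Y a a0.
  by apply/matrixP => i j; rewrite !mxE; field; rewrite Hb1 a0.
have IH' := IH (fun i h => Hal i (leqW h)) (fun i h => Hbe i (leqW h)).
have aK : al K.+1 != 0 by apply: Hal.
have bK : be K != 0 by apply: Hbe.
rewrite u_S p_S Ng z_S v_all q_S !mulmxDr ?mulmxN !mulmxZ.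
move: (A^T *m u K) (C *m p K) (N *m g K) IH' => U P G IH'.
move: (A^T *m w K.+1) (C *m r K.+1) (al K.+1) (be K) (z K) aK bK IH' => X Y a e Z aK bK IH'.
move: b IH' => bb IH'.
have -> : bb = (bb - U + P) - P + U by rewrite addrK subrK.
rewrite IH'.
by apply/matrixP => i j; rewrite !mxE; field; rewrite aK bK.
Qed.

Local Notation NQ i j := (dotv (q i) (N *m q j)).
Local Notation XX i j := (dotv (v i) (M *m v j) + dotv (rho i) (C *m rho j)).

Lemma NQsym i j : NQ i j = NQ j i.
Proof. exact: dotv_sym. Qed.

Lemma XXsym i j : XX i j = XX j i.
Proof. by rewrite (@dotv_sym _ _ _ _ _ HMs) (@dotv_sym _ _ _ _ _ HCs). Qed.

Lemma XXnorm i : al i != 0 -> XX i i = 1.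
Proof.
move=> a0.
have Hs : al i ^+ 2 = qform M (w i) + dotv (r i) (s i).
  rewrite {1}al_all sqr_sqrtr // addr_ge0 // s_all -qformE //.
rewrite v_all !mulmxZ !dotvZl !dotvZr -qformE.
move: Hs; rewrite s_all.
move: (qform M (w i)) (dotv (r i) (C *m r i)) (al i) a0 => Q D a a0 Hs.
have -> : Q = a ^+ 2 - D by rewrite Hs addrK.
by field.
Qed.

Lemma NQnormS i : be i != 0 -> NQ i.+1 i.+1 = 1.
Proof.
move=> b0.
have Hs : be i ^+ 2 = qform N (g i) by rewrite /normG sqr_sqrtr.
rewrite q_S !mulmxZ dotvZl dotvZr -qformE.
move: Hs; move: (qform N (g i)) (be i) b0 => Q e e0 <-.
by field.
Qed.

Lemma NQnorm0 : beta1 != 0 -> NQ 0 0 = 1.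
Proof.
move=> b0.
have Hs : beta1 ^+ 2 = qform (invmx N) b by rewrite /craig_beta1 /normG sqr_sqrtr.
rewrite q_0 !mulmxZ dotvZl dotvZr NinvN dotvC -qformE.
move: Hs; move: (qform (invmx N) b) beta1 b0 => Q e e0 <-.
by field.
Qed.

Lemma rel_v0 : al 0 != 0 -> invmx M *m (A *m q 0) = al 0 *: v 0.
Proof. by move=> a0; rewrite v_all scalerA mulfV // scale1r. Qed.

Lemma rel_vS i : al i.+1 != 0 ->
  invmx M *m (A *m q i.+1) = al i.+1 *: v i.+1 + be i *: v i.
Proof.
move=> a0; rewrite [v i.+1]v_all scalerA mulfV // scale1r w_S.
by rewrite subrK.
Qed.

Lemma rel_q0 : al 0 != 0 -> q 0 = al 0 *: rho 0.
Proof. by move=> a0; rewrite scalerA mulfV // scale1r. Qed.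

Lemma rel_qS i : al i.+1 != 0 -> q i.+1 = al i.+1 *: rho i.+1 + be i *: rho i.
Proof.
move=> a0; rewrite scalerA mulfV // scale1r r_S scalerA.
by rewrite subrK.
Qed.

Lemma F1 (x : 'cV[R]_n) j : dotv x (A^T *m v j + C *m rho j) =
  dotv (invmx M *m (A *m x)) (M *m v j) + dotv x (C *m rho j).
Proof. by rewrite dotvDr dotv_mul trmxK (@dotv_mul _ _ _ M) HMs MinvM. Qed.

Lemma F2 j : A^T *m v j + C *m rho j = N *m (g j + al j *: q j).
Proof. by rewrite mulmxDr Ng (@mulmxZ _ _ _ N) subrK. Qed.

Lemma Bd0 i : al 0 != 0 -> dotv (q 0) (A^T *m v i + C *m rho i) = al 0 * XX 0 i.
Proof.
move=> a0; rewrite F1 rel_v0 // rel_q0 // !dotvZl.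
by rewrite mulrDr.
Qed.

Lemma BdS j i : al j.+1 != 0 -> dotv (q j.+1) (A^T *m v i + C *m rho i) =
  al j.+1 * XX j.+1 i + be j * XX j i.
Proof.
move=> a0; rewrite F1 rel_vS // rel_qS // !dotvDl !dotvZl.
by rewrite !mulrDr addrACA.
Qed.

Definition Inv K := forall i j, (i <= K)%N -> (j <= K)%N ->
  NQ i j = (i == j)%:R /\ XX i j = (i == j)%:R.

Lemma orthO K : (forall i, (i <= K)%N -> al i != 0) -> Inv K ->
  forall j, (j <= K)%N -> dotv (q j) (N *m g K) = 0.
Proof.
move=> Hal HI j jK.
rewrite Ng dotvBr dotvZr.
case: j jK => [|j] jK.
  rewrite Bd0 ?Hal // (HI 0%N K _ _).1 // (HI 0%N K _ _).2 //.
  by have [<-|ne] := eqVneq 0%N K; rewrite ?eqxx ?(negbTE ne) ?mulr1 ?mulr0 subrr.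
rewrite BdS ?Hal // (HI j.+1 K _ _).1 // (HI j.+1 K _ _).2 // (HI j K _ _).2 ?(ltnW jK) //.
rewrite (ltn_eqF jK) mulr0 addr0.
by have [<-|ne] := eqVneq j.+1 K; rewrite ?eqxx ?(negbTE ne) ?mulr1 ?mulr0 subrr.
Qed.

Lemma invK : beta1 != 0 -> forall K, (forall i, (i <= K)%N -> al i != 0) ->
  (forall i, (i < K)%N -> be i != 0) -> Inv K.
Proof.
move=> Hb1; elim=> [|K IH] Hal Hbe.
  move=> i j; rewrite !leqn0 => /eqP-> /eqP->; rewrite eqxx; split.
    exact: NQnorm0.
  by apply: XXnorm; apply: Hal.
have HI := IH (fun i h => Hal i (leqW h)) (fun i h => Hbe i (leqW h)).
have O := @orthO K (fun i h => Hal i (leqW h)) HI.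
have be0 : be K != 0 by apply: Hbe.
have a1 : al K.+1 != 0 by apply: Hal.
have NQa : forall j, (j <= K)%N -> NQ j K.+1 = 0.
  by move=> j jK; rewrite q_S (@mulmxZ _ _ _ N) dotvZr O // mulr0.
have NQb : NQ K.+1 K.+1 = 1 := NQnormS K be0.
have NQall : forall i j, (i <= K.+1)%N -> (j <= K.+1)%N -> NQ i j = (i == j)%:R.
  move=> i j; rewrite [(i <= _)%N]leq_eqVlt [(j <= _)%N]leq_eqVlt !ltnS => /orP[/eqP->|iK] /orP[/eqP->|jK].
  - by rewrite eqxx NQb.
  - by rewrite NQsym NQa // gtn_eqF.
  - by rewrite NQa // ltn_eqF.
  - exact: (HI i j iK jK).1.
have XXa : forall j, (j <= K)%N -> XX j K.+1 = 0.
  move=> j jK.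
  have Ev : al K.+1 *: v K.+1 = invmx M *m (A *m q K.+1) - be K *: v K.
    by rewrite v_all scalerA mulfV // scale1r.
  have Er : al K.+1 *: rho K.+1 = q K.+1 - be K *: rho K.
    by rewrite scalerA mulfV // scale1r r_S scalerA.
  have Eg : g j = be j *: q j.+1 by rewrite q_S scalerA mulfV ?scale1r ?Hbe.
  have E1 : dotv (v j) (A *m q K.+1) + dotv (rho j) (C *m q K.+1) =
      dotv (q K.+1) (A^T *m v j + C *m rho j).
    by rewrite dotvDr (@dotv_mul _ _ _ (A^T)) trmxK [dotv (A *m _) _]dotvC (@dotv_sym _ _ _ _ _ HCs).
  have : al K.+1 * XX j K.+1 = 0.
    rewrite mulrDr -!dotvZr -!mulmxZ Ev Er.
    rewrite !mulmxBr MinvM (@mulmxZ _ _ _ M (be K) (v K)) (@mulmxZ _ _ _ C (be K) (rho K)) !dotvBr !dotvZr.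
    rewrite addrACA E1 -opprD -mulrDr F2 mulmxDr dotvDr.
    rewrite (@mulmxZ _ _ _ N (al j) (q j)) dotvZr Eg.
    rewrite (@mulmxZ _ _ _ N (be j) (q j.+1)) dotvZr (HI j K jK (leqnn K)).2.
    rewrite (NQall K.+1 j.+1) ?ltnS // (NQall K.+1 j) ?(leqW jK) // (gtn_eqF (jK : (j < K.+1)%N)) eqSS.
    rewrite [(K == j)]eq_sym; have [->|ne] := eqVneq j K; rewrite ?eqxx ?(negbTE ne) /=;
      by rewrite ?mulr0n ?mulr1n ?mulr0 ?mulr1 ?addr0 ?subrr.
  by move/eqP; rewrite mulf_eq0 (negbTE a1) /= => /eqP.
move=> i j; rewrite [(i <= _)%N]leq_eqVlt [(j <= _)%N]leq_eqVlt !ltnS.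
move=> Hi Hj.
case/orP: Hi => [/eqP->|iK]; case/orP: Hj => [/eqP->|jK].
- by rewrite eqxx /= NQb (XXnorm K.+1 a1).
- by rewrite NQall ?(leqW jK) // XXsym XXa // (gtn_eqF (jK : (j < K.+1)%N)).
- by rewrite NQall ?(leqW iK) // XXa // (ltn_eqF (iK : (i < K.+1)%N)).
- exact: HI.
Qed.

Lemma main_sec (k : nat) : beta1 != 0 ->
  (1 <= k)%N ->
  (forall j, (1 <= j <= k)%N -> craig_alpha M A C N b j != 0) ->
  (forall j, (2 <= j <= k)%N -> craig_beta M A C N b j != 0) ->
  let uk := craig_u M A C N b k in
  let pk := craig_p M A C N b k in
  let zk := craig_zeta M A C N b k in
  let res := b - A^T *m uk + C *m pk in
  M *m uk + A *m pk = 0 /\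
      res = - (zk *: (N *m craig_g M A C N b k)) /\
      (0 < craig_beta M A C N b k.+1 ->
         res = - ((zk * craig_beta M A C N b k.+1) *: (N *m craig_q M A C N b k.+1))) /\
      (forall j, (1 <= j <= k)%N -> dotv (craig_q M A C N b j) res = 0) /\
      normG (invmx N) res = craig_beta M A C N b k.+1 * `|zk| /\
    normG (invmx N) res / normG (invmx N) b
        = craig_beta M A C N b k.+1 * `|zk| / craig_beta M A C N b 1.
Proof.
move=> Hb1; case: k => [//|K] _ Hal1 Hbe1 uk pk zk res.
have Hal : forall i, (i <= K)%N -> al i != 0.
  by move=> i iK; apply: (Hal1 i.+1); apply/andP; split.
have Hbe : forall i, (i < K)%N -> be i != 0.
  by move=> i iK; apply: (Hbe1 i.+2); apply/andP; split.
have HI := invK Hb1 K Hal Hbe.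
have C2 : res = - (z K *: (N *m g K)) by exact: claim2.
have E5 : normG (invmx N) res = be K * `|z K|.
  rewrite C2 -scaleNr /normG qformE (@mulmxZ _ _ _ (invmx N)) mulmxA mulVmx // mul1mx.
  rewrite dotvZl dotvZr dotvC -qformE mulrA -expr2 sqrtrM ?sqr_ge0 // sqrtr_sqr.
  by rewrite normrN mulrC.
split; first exact: claim1.
split; first exact: C2.
split.
  change (craig_q M A C N b K.+2) with (q K.+1).
  change (craig_beta M A C N b K.+2) with (be K).
  move=> bpos; rewrite C2 q_S (@mulmxZ _ _ _ N) scalerA.
  by rewrite mulfK // gt_eqF.
split.
  move=> j /andP[j1 jk]; rewrite C2 /craig_q dotvNr dotvZr.
  case: j j1 jk => [//|j] _ jk.
  by rewrite (@orthO K Hal HI) ?mulr0 ?oppr0.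
split; first exact: E5.
by rewrite E5.
Qed.

End Main.

Lemma qform0 (R : rcfType) (k : nat) (G : 'M[R]_k) : qform G 0 = 0.
Proof. by rewrite qformE mulmx0 dotv0r. Qed.

Lemma pd_ge0 (R : rcfType) (k : nat) (G : 'M[R]_k) :
  sym_pos_def G -> forall x, 0 <= qform G x.
Proof.
move=> [_ HG] x; have [->|nx] := eqVneq x 0; first by rewrite qform0.
exact: ltW (HG x nx).
Qed.

Lemma pd_unit (R : rcfType) (k : nat) (G : 'M[R]_k) :
  sym_pos_def G -> G \in unitmx.
Proof.
move=> [_ HG]; rewrite -row_free_unit -kermx_eq0; apply/negPn/negP => /rowV0Pn [y].
move=> /sub_kermxP Hy y0.
have yT0 : y^T != 0 by apply: contra y0 => /eqP/(congr1 trmx); rewrite trmxK trmx0 => ->.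
have := HG _ yT0; rewrite /qform trmxK Hy mul0mx mxE.
by rewrite ltxx.
Qed.

Lemma pd_inv (R : rcfType) (k : nat) (G : 'M[R]_k) :
  sym_pos_def G -> forall x, qform (invmx G) x = qform G (invmx G *m x).
Proof.
move=> HG x; have Hu := @pd_unit _ _ _ HG.
by rewrite !qformE mulmxA mulmxV // mul1mx dotvC.
Qed.

Theorem mainTheorem3 (R : rcfType) (m n : nat)
  (M : 'M[R]_m) (A : 'M[R]_(m, n)) (C : 'M[R]_n) (N : 'M[R]_n) (b : 'cV[R]_n)
  (k : nat) :
  sym_pos_def M ->
  (n <= m)%N -> \rank A = n ->
  sym_pos_semidef C ->
  b != 0 ->
  sym_pos_def N ->
  (1 <= k)%N ->
  (* the recurrence has not stopped before step k and all quantities up to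
     index k are defined: alpha_1..alpha_k nonzero, beta_2..beta_k nonzero *)
  (forall j, (1 <= j <= k)%N -> craig_alpha M A C N b j != 0) ->
  (forall j, (2 <= j <= k)%N -> craig_beta M A C N b j != 0) ->
  let uk := craig_u M A C N b k in
  let pk := craig_p M A C N b k in
  let zk := craig_zeta M A C N b k in
  let res := b - A^T *m uk + C *m pk in
  M *m uk + A *m pk = 0 /\
      res = - (zk *: (N *m craig_g M A C N b k)) /\
      (0 < craig_beta M A C N b k.+1 ->
         res = - ((zk * craig_beta M A C N b k.+1) *: (N *m craig_q M A C N b k.+1))) /\
      (forall j, (1 <= j <= k)%N -> dotv (craig_q M A C N b j) res = 0) /\
      normG (invmx N) res = craig_beta M A C N b k.+1 * `|zk| /\
    normG (invmx N) res / normG (invmx N) b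
        = craig_beta M A C N b k.+1 * `|zk| / craig_beta M A C N b 1.
Proof.
move=> HM _ _ HC hb HN hk Hal Hbe.
have HMu := @pd_unit _ _ _ HM.
have HNu := @pd_unit _ _ _ HN.
have HNipos : forall x, 0 <= qform (invmx N) x.
  by move=> x; rewrite (@pd_inv _ _ _ HN); apply: pd_ge0.
have Hb1 : craig_beta1 N b != 0.
  rewrite /craig_beta1 /normG gt_eqF // sqrtr_gt0 (@pd_inv _ _ _ HN).
  apply: HN.2; apply: contra hb => /eqP H.
  by rewrite -[b](@NinvN _ _ N HNu) H mulmx0.
apply: main_sec => //.
- exact: HM.1.
- exact: HC.1.
- exact: HN.1.
- exact: pd_ge0.
- exact: HC.2.
- exact: pd_ge0.
Qed.
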